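(* Let $G=(V,E)$ be a graph with $V=\{1,\ldots,n\}$, let $\mathbf{w}\colon E\to\{1,\ldots,N\}$, and let $w,\ell\in\mathbb{N}$ with $\ell$ even and $\ell\le n$. Define $$\mathcal{M}_{w,\ell}=\{(M_1,M_2)\mid M_1,M_2 \text{ are consistent matchings in } G,\ |M_1|=|M_2|=\ell/2,\ \mathbf{w}(M_1\cup M_2)=w\},$$ $$U_{w,\ell}=\Big\{(E_1,E_2,L)\ \Big|\ E_1,E_2\in\tbinom{E}{\ell/2},\ E_1\cap E_2=\emptyset,\ \mathbf{w}(E_1\cup E_2)=w,\ L\in\tbinom{V}{n-\ell}\Big\},$$ and for $i\in[2n]$ let $A_{w,\ell,i}=\{(E_1,E_2,L)\in U_{w,\ell}\mid i\in V(E_1)\cup L\}$ if $i\in[n]$, and $A_{w,\ell,i}=\{(E_1,E_2,L)\in U_{w,\ell}\mid i-n\in V(E_2)\cup L\}$ if $i\in[n+1,2n]$. Then $$\Big|\bigcap_{i\in[2n]}A_{w,\ell,i}\Big|=|\mathcal{M}_{w,\ell}|.$$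
   Context: Two matchings $M_1,M_2$ of a graph are consistent if $M_1\cap M_2=\emptyset$ and $V(M_1)=V(M_2)$, where $V(M)$ denotes the set of endpoints of edges of $M$. For a set $F$ of edges, $\mathbf{w}(F)=\sum_{e\in F}\mathbf{w}(e)$. $\binom{S}{k}$ is the family of $k$-element subsets of $S$; $[n]=\{1,\ldots,n\}$ and $[a,b]=\{a,\ldots,b\}$. *)

(* Defs.v *)
From mathcomp Require Import all_boot.
Set Implicit Arguments. Unset Strict Implicit. Unset Printing Implicit Defensive.

(* A (simple) graph on vertex set 'I_n (= {1..n} shifted to 0-based) is given
   by its edge set E : {set {set 'I_n}}, every edge being a 2-element set. *)
Definition simple_graph n (E : {set {set 'I_n}}) : Prop :=
  forall e, e \in E -> #|e| = 2.

Definition Vof n (M : {set {set 'I_n}}) : {set 'I_n} := \bigcup_(e in M) e.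

Definition matching n (E M : {set {set 'I_n}}) : bool :=
  (M \subset E) &&
  [forall e1 in M, forall e2 in M, (e1 != e2) ==> [disjoint e1 & e2]].

Definition consistent n (M1 M2 : {set {set 'I_n}}) : bool :=
  (M1 :&: M2 == set0) && (Vof M1 == Vof M2).

Definition wsum n (wt : {set 'I_n} -> nat) (F : {set {set 'I_n}}) : nat :=
  \sum_(e in F) wt e.

Definition Mset n (E : {set {set 'I_n}}) (wt : {set 'I_n} -> nat) (w l : nat)
  : {set {set {set 'I_n}} * {set {set 'I_n}}} :=
  [set p : {set {set 'I_n}} * {set {set 'I_n}} | [&& matching E p.1, matching E p.2, consistent p.1 p.2,
              #|p.1| == l./2, #|p.2| == l./2 & wsum wt (p.1 :|: p.2) == w]].

Definition triple n := ({set {set 'I_n}} * {set {set 'I_n}} * {set 'I_n})%type.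

Definition Uset n (E : {set {set 'I_n}}) (wt : {set 'I_n} -> nat) (w l : nat)
  : {set triple n} :=
  [set t : triple n | [&& t.1.1 \subset E, #|t.1.1| == l./2,
              t.1.2 \subset E, #|t.1.2| == l./2,
              t.1.1 :&: t.1.2 == set0,
              wsum wt (t.1.1 :|: t.1.2) == w & #|t.2| == n - l]].

(* A_{w,l,i} for i in [2n], indexed 0-based by 'I_(2n): i < n corresponds to
   vertex i, i >= n to vertex i - n. *)
Definition Aset n (E : {set {set 'I_n}}) (wt : {set 'I_n} -> nat) (w l : nat)
  (i : 'I_(2 * n)) : {set triple n} :=
  [set t in Uset E wt w l |
     if (i < n) then (i : nat) \in [seq val x | x in Vof t.1.1 :|: t.2]
     else ((i : nat) - n) \in [seq val x | x in Vof t.1.2 :|: t.2]].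

(* Main.v *)
Require Import Defs.
From mathcomp Require Import all_boot.
From mathcomp Require Import zify.

Lemma mem_valS n (S : {set 'I_n}) (x : 'I_n) :
  ((x : nat) \in [seq val y | y in S]) = (x \in S).
Proof. by rewrite /image_mem (mem_map val_inj) mem_enum. Qed.

Lemma sum_sg n (E M : {set {set 'I_n}}) : simple_graph E -> M \subset E ->
  \sum_(B in M) #|B| = 2 * #|M|.
Proof.
move=> sg sME; rewrite (eq_bigr (fun _ => 2)).
  by rewrite sum_nat_const mulnC.
by move=> B BM; apply: sg; apply: (subsetP sME).
Qed.

Theorem lemma4 (n N : nat) (E : {set {set 'I_n}}) (wt : {set 'I_n} -> nat)
  (w l : nat) :
  simple_graph E ->
  (forall e, e \in E -> 1 <= wt e <= N) ->
  ~~ odd l -> l <= n ->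
  #|Uset E wt w l :&: \bigcap_(i < 2 * n) Aset E wt w l i| = #|Mset E wt w l|.
Proof.
move=> sg _ ev le.
have hl : 2 * l./2 = l.
  by have := odd_double_half l; rewrite (negbTE ev) add0n -mul2n.
pose f := fun p : {set {set 'I_n}} * {set {set 'I_n}} => (p.1, p.2, ~: Vof p.1) : triple n.
have finj : injective f by move=> [a b] [c d] /= [-> ->].
rewrite -(card_imset _ finj); apply: eq_card => t.
apply/idP/idP.
- case/setIP => tU /bigcapP tA.
  case: t tU tA => [[E1 E2] L] tU tA.
  have tU' := tU; rewrite inE /= in tU'.
  case/and5P: tU' => sE1 cE1 sE2 cE2 /and3P [dis wE cL].
  have H1 : forall v : 'I_n, v \in Vof E1 :|: L.
    move=> v; have hv : v < 2 * n by have := ltn_ord v; lia.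
    have := tA (Ordinal hv) isT; rewrite /Aset => /setIdP [_] /=.
    by rewrite ltn_ord mem_valS.
  have H2 : forall v : 'I_n, v \in Vof E2 :|: L.
    move=> v; have hv : n + v < 2 * n by have := ltn_ord v; lia.
    have := tA (Ordinal hv) isT; rewrite /Aset => /setIdP [_] /=.
    rewrite ifF; last by lia.
    by rewrite addKn mem_valS.
  have key : forall E0 : {set {set 'I_n}}, E0 \subset E -> #|E0| == l./2 ->
      (forall v : 'I_n, v \in Vof E0 :|: L) ->
      matching E E0 /\ L = ~: Vof E0.
    move=> E0 sE0 cE0 Hv.
    have s0 := @sum_sg _ _ _ sg sE0.
    have c1 : #|Vof E0| <= l.
      rewrite -hl -(eqP cE0) -s0; exact: (leq_card_cover E0).
    have U : Vof E0 :|: L = setT by apply/setP => v; by rewrite in_setT Hv.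
    have cU := cardsU (Vof E0) L; rewrite U cardsT card_ord in cU.
    have e1 : #|Vof E0| = l by move: cU; rewrite (eqP cL); lia.
    have hc : #|Vof E0 :&: L| <= #|L| := subset_leq_card (subsetIr _ _).
    have e2 : #|Vof E0 :&: L| = 0 by move: cU hc; rewrite (eqP cL) e1; move: (#|_ :&: _|) => c; lia.
    have tr : trivIset E0.
      by rewrite /trivIset s0 (eqP cE0) hl -e1.
    split.
      rewrite /matching sE0 /=; apply/forall_inP => e1' h1; apply/forall_inP => e2' h2.
      by apply/implyP => ne; apply: (trivIsetP tr).
    apply/setP => v; rewrite inE; have := Hv v.
    have : v \notin Vof E0 :&: L by rewrite (cards0_eq e2) inE.
    by rewrite !inE; case: (v \in Vof E0); case: (v \in L).
  have [m1 L1] := key E1 sE1 cE1 H1.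
  have [m2 L2] := key E2 sE2 cE2 H2.
  apply/imsetP; exists (E1, E2); last by rewrite /f /= -L1.
  rewrite inE /= m1 m2 cE1 cE2 wE /consistent dis /=.
  by rewrite -(setCK (Vof E1)) -L1 L2 setCK eqxx.
- case/imsetP => [[M1 M2] pM ->]; rewrite inE /= in pM.
  case/and5P: pM => m1 m2 /andP [dis Veq] c1 /andP [c2 wE].
  have sM1 : M1 \subset E by case/andP: m1.
  have sM2 : M2 \subset E by case/andP: m2.
  have tr : trivIset M1.
    apply/trivIsetP => A B hA hB ne.
    case/andP: m1 => _ /forall_inP/(_ A hA)/forall_inP/(_ B hB)/implyP; exact.
  have cV : #|Vof M1| = l.
    by have := eqP tr; rewrite (@sum_sg _ _ _ sg sM1) (eqP c1) hl => <-.
  have fU : f (M1, M2) \in Uset E wt w l.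
    have cC : #|~: Vof M1| = n - l.
      by have := cardsC (Vof M1); rewrite card_ord cV; move: (#|~: _|) => x; lia.
    by rewrite inE /= sM1 sM2 c1 c2 dis wE cC eqxx.
  rewrite inE fU /=; apply/bigcapP => i _.
  rewrite /Aset; apply/setIdP; split => //=.
  case: ifP => hi.
    by rewrite setUCr (mem_valS _ _ (Ordinal hi)) inE.
  have hi' : i - n < n by have := ltn_ord i; move: hi; lia.
  by rewrite -(eqP Veq) setUCr (mem_valS _ _ (Ordinal hi')) inE.
Qed.
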